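(* Let $G=(V,E)$ be a regular graph, identified with its (symmetric) random-walk matrix, let $\lambda\in(0,1)$, $q\ge2$, and let $P_{\ge\lambda}$ be the orthogonal projector onto the span of the eigenvectors of $G$ with eigenvalue at least $\lambda$. Then for every nonempty $S\subseteq V$, $$\Phi(S)\ \ge\ 1-\lambda-\|P_{\ge\lambda}\|_{q/(q-1)\to2}^2\,\mu(S)^{(q-2)/q}.$$
   Context: Functions on $V$ carry the uniform (expectation) measure: $\|f\|_p=(\mathbb{E}_{x\in V}|f(x)|^p)^{1/p}$, $\langle f,g\rangle=\mathbb{E}_xf(x)g(x)$, and $\|A\|_{p\to2}=\max_{\|f\|_p\le1}\|Af\|_2$. $\mu(S)=|S|/|V|$. The expansion $\Phi(S)=\Pr[y\notin S]$, where $x$ is uniform in $S$ and $y$ is a uniformly random neighbor of $x$. *)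

(* Defs.v *)
From Stdlib Require Import Reals List.
Import ListNotations.
Open Scope R_scope.

(* The vertex set V is {0, ..., n-1}; functions on V are nat -> R
   (values outside V are irrelevant). *)

Definition vsum (n : nat) (f : nat -> R) : R :=
  fold_right Rplus 0 (map f (seq 0 n)).

Definition vexp (n : nat) (f : nat -> R) : R := vsum n f / INR n.

(* real power with the convention 0^y = 0 (for y > 0) *)
Definition rpow (x y : R) : R :=
  if Req_EM_T x 0 then 0 else Rpower x y.

Definition pnorm (n : nat) (p : R) (f : nat -> R) : R :=
  rpow (vexp n (fun x => rpow (Rabs (f x)) p)) (1 / p).

Definition inner (n : nat) (f g : nat -> R) : R := vexp n (fun x => f x * g x).

Definition b2R (b : bool) : R := if b then 1 else 0.

Definition regular_graph (n : nat) (adj : nat -> nat -> bool) (d : nat) : Prop :=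
  (forall x y, adj x y = adj y x) /\
  (forall x, adj x x = false) /\
  (forall x, (x < n)%nat -> vsum n (fun y => b2R (adj x y)) = INR d).

Definition walk (n : nat) (adj : nat -> nat -> bool) (d : nat) (f : nat -> R) : nat -> R :=
  fun x => vsum n (fun y => b2R (adj x y) * f y) / INR d.

Definition eigvec (n : nat) (adj : nat -> nat -> bool) (d : nat) (m : R) (v : nat -> R) : Prop :=
  (exists x, (x < n)%nat /\ v x <> 0) /\
  (forall x, (x < n)%nat -> walk n adj d v x = m * v x).

Definition top_span (n : nat) (adj : nat -> nat -> bool) (d : nat) (lam : R) (g : nat -> R) : Prop :=
  exists l : list (R * (nat -> R)),
    (forall c v, In (c, v) l -> exists m, lam <= m /\ eigvec n adj d m v) /\
    (forall x, (x < n)%nat -> g x = fold_right Rplus 0 (map (fun cv => fst cv * snd cv x) l)).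

Definition orth_projector (n : nat) (W : (nat -> R) -> Prop) (P : (nat -> R) -> (nat -> R)) : Prop :=
  forall f, W (P f) /\ (forall w, W w -> inner n (fun x => f x - P f x) w = 0).

(* the set { ||P f||_2 : ||f||_p <= 1 }, whose supremum is ||P||_{p->2} *)
Definition opnorm_set (n : nat) (p : R) (P : (nat -> R) -> (nat -> R)) (r : R) : Prop :=
  exists f, pnorm n p f <= 1 /\ r = pnorm n 2 (P f).

Definition mu (n : nat) (S : nat -> bool) : R := vexp n (fun x => b2R (S x)).

(* Phi(S) = Pr[y notin S], x uniform in S, y uniform neighbour of x *)
Definition expansion (n : nat) (adj : nat -> nat -> bool) (d : nat) (S : nat -> bool) : R :=
  vsum n (fun x => b2R (S x) *
     (vsum n (fun y => b2R (adj x y) * b2R (negb (S y))) / INR d))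
  / vsum n (fun x => b2R (S x)).

(* Main.v *)
Require Import Defs.
From Stdlib Require Import Reals List Lra Lia FunctionalExtensionality Classical.
Open Scope R_scope.
Lemma fold_shift (l : list R) (a : R) : fold_right Rplus a l = fold_right Rplus 0 l + a.
Proof. induction l as [|x l IH]; simpl; [ring| rewrite IH; ring]. Qed.

Lemma vsum_0 f : vsum 0 f = 0.
Proof. reflexivity. Qed.

Lemma vsum_S n f : vsum (S n) f = vsum n f + f n.
Proof. unfold vsum. rewrite seq_S, map_app, fold_right_app. simpl. rewrite fold_shift. ring. Qed.

Lemma vsum_ext n f g : (forall x, (x < n)%nat -> f x = g x) -> vsum n f = vsum n g.
Proof.
  induction n as [|n IH]; intro H; [reflexivity|].
  rewrite !vsum_S, IH, H; [reflexivity| lia | intros; apply H; lia].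
Qed.

Lemma vsum_plus n f g : vsum n (fun x => f x + g x) = vsum n f + vsum n g.
Proof. induction n as [|n IH]; [rewrite !vsum_0; ring|]. rewrite !vsum_S, IH. ring. Qed.

Lemma vsum_scal n c f : vsum n (fun x => c * f x) = c * vsum n f.
Proof. induction n as [|n IH]; [rewrite !vsum_0; ring|]. rewrite !vsum_S, IH. ring. Qed.

Lemma vsum_minus n f g : vsum n (fun x => f x - g x) = vsum n f - vsum n g.
Proof.
  replace (fun x => f x - g x) with (fun x => f x + (-1) * g x) by (apply functional_extensionality; intro; ring).
  rewrite vsum_plus, vsum_scal. ring.
Qed.

Lemma vsum_const0 n : vsum n (fun _ => 0) = 0.
Proof. induction n as [|n IH]; [reflexivity|]. rewrite vsum_S, IH. ring. Qed.

Lemma vsum_le n f g : (forall x, (x < n)%nat -> f x <= g x) -> vsum n f <= vsum n g.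
Proof.
  induction n as [|n IH]; intro H; [rewrite !vsum_0; lra|].
  rewrite !vsum_S. assert (vsum n f <= vsum n g) by (apply IH; intros; apply H; lia).
  assert (f n <= g n) by (apply H; lia). lra.
Qed.

Lemma vsum_nonneg n f : (forall x, (x < n)%nat -> 0 <= f x) -> 0 <= vsum n f.
Proof. intro H. rewrite <- (vsum_const0 n). apply vsum_le. exact H. Qed.

Lemma vsum_pos n f x0 : (forall x, (x < n)%nat -> 0 <= f x) -> (x0 < n)%nat -> 0 < f x0 -> 0 < vsum n f.
Proof.
  induction n as [|n IH]; intros H Hx Hp; [lia|].
  rewrite vsum_S. destruct (Nat.eq_dec x0 n) as [->|ne].
  - assert (0 <= vsum n f) by (apply vsum_nonneg; intros; apply H; lia). lra.
  - assert (0 < vsum n f) by (apply IH; [intros; apply H; lia| lia | exact Hp]).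
    assert (0 <= f n) by (apply H; lia). lra.
Qed.

Lemma vsum_swap n m (F : nat -> nat -> R) :
  vsum n (fun x => vsum m (fun y => F x y)) = vsum m (fun y => vsum n (fun x => F x y)).
Proof.
  induction n as [|n IH].
  - rewrite vsum_0. symmetry. apply (vsum_const0 m).
  - rewrite vsum_S, IH. rewrite <- vsum_plus. apply vsum_ext. intros. rewrite vsum_S. reflexivity.
Qed.

Lemma fold_le {T : Type} (F G : T -> R) (l : list T) :
  (forall t, In t l -> F t <= G t) -> fold_right Rplus 0 (map F l) <= fold_right Rplus 0 (map G l).
Proof.
  induction l as [|t l IH]; intro H; simpl; [lra|].
  assert (F t <= G t) by (apply H; left; reflexivity).
  assert (fold_right Rplus 0 (map F l) <= fold_right Rplus 0 (map G l)) by (apply IH; intros; apply H; right; assumption).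
  lra.
Qed.

Lemma fold_plus {T : Type} (F G : T -> R) (l : list T) :
  fold_right Rplus 0 (map (fun t => F t + G t) l) = fold_right Rplus 0 (map F l) + fold_right Rplus 0 (map G l).
Proof. induction l as [|t l IH]; simpl; [ring|]. rewrite IH. ring. Qed.

Lemma fold_scal {T : Type} c (F : T -> R) (l : list T) :
  fold_right Rplus 0 (map (fun t => c * F t) l) = c * fold_right Rplus 0 (map F l).
Proof. induction l as [|t l IH]; simpl; [ring|]. rewrite IH. ring. Qed.

Definition SPEC : Prop := forall n (a : nat -> nat -> R),
  (forall x y, lt x n -> lt y n -> a x y = a y x) ->
  exists l : list (R * (nat -> R)),
   (forall m u, In (m, u) l -> forall x, lt x n ->
       vsum n (fun y => Rmult (a x y) (u y)) = Rmult m (u x)) /\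
   (forall g, vsum n (fun x => Rmult (g x) (g x)) =
      fold_right Rplus 0 (map (fun mu => pow (vsum n (fun x => Rmult (g x) (snd mu x))) 2) l)) /\
   (forall g, vsum n (fun x => Rmult (g x) (vsum n (fun y => Rmult (a x y) (g y)))) =
      fold_right Rplus 0 (map (fun mu => Rmult (fst mu) (pow (vsum n (fun x => Rmult (g x) (snd mu x))) 2)) l)).

Lemma rpow_sq y : rpow (Rabs y) 2 = y * y.
Proof.
  unfold rpow; destruct (Req_EM_T (Rabs y) 0) as [e|ne].
  - assert (y = 0) by (destruct (Req_dec y 0); [assumption| apply Rabs_no_R0 in H; contradiction]).
    subst; ring.
  - replace 2 with (INR 2) by (simpl; ring). rewrite Rpower_pow.
    + simpl. rewrite Rmult_1_r, <- Rabs_mult. apply Rabs_pos_eq. nra.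
    + pose proof (Rabs_pos y). lra.
Qed.

Lemma rpow_half X : 0 <= X -> rpow X (1/2) = sqrt X.
Proof.
  intro HX. unfold rpow; destruct (Req_EM_T X 0) as [e|ne].
  - subst. rewrite sqrt_0. reflexivity.
  - replace (1/2) with (/2) by field. apply Rpower_sqrt. lra.
Qed.

Lemma b2R_01 b : b2R b * b2R b = b2R b.
Proof. destruct b; simpl; ring. Qed.

Lemma b2R_nonneg b : 0 <= b2R b.
Proof. destruct b; simpl; lra. Qed.

Lemma b2R_negb b : b2R (negb b) = 1 - b2R b.
Proof. destruct b; simpl; ring. Qed.

Lemma Rpower_pos x y : 0 < Rpower x y.
Proof. unfold Rpower. apply exp_pos. Qed.

Lemma div_nn a b : 0 <= a -> 0 < b -> 0 <= a / b.
Proof. intros; unfold Rdiv; apply Rmult_le_pos; [lra| left; apply Rinv_0_lt_compat; lra]. Qed.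

Lemma main_aux (spec : SPEC) (n : nat) (adj : nat -> nat -> bool) (d : nat)
  (lam q : R) (P : (nat -> R) -> (nat -> R)) (N : R) (S : nat -> bool) :
  (1 <= d)%nat ->
  regular_graph n adj d ->
  0 < lam < 1 ->
  2 <= q ->
  orth_projector n (top_span n adj d lam) P ->
  is_lub (opnorm_set n (q / (q - 1)) P) N ->
  (exists x, (x < n)%nat /\ S x = true) ->
  (forall x, S x = true -> (x < n)%nat) ->
  expansion n adj d S >= 1 - lam - N ^ 2 * rpow (mu n S) ((q - 2) / q).
Proof.
  intros Hd [Hsym [Hirr Hdeg]] Hlam Hq Horth Hlub [x0 [Hx0 HSx0]] HSn.
  assert (Hn : (0 < n)%nat) by lia.
  assert (HnR : 0 < INR n) by (apply lt_0_INR; lia).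
  assert (HdR : 0 < INR d) by (apply lt_0_INR; lia).
  set (f := fun x => b2R (S x)).
  set (s := vsum n f).
  assert (Hs : 0 < s).
  { apply vsum_pos with x0; [intros; apply b2R_nonneg | exact Hx0 | unfold f; rewrite HSx0; simpl; lra]. }
  set (mu0 := mu n S).
  assert (Hmus : mu0 = s / INR n) by reflexivity.
  assert (Hmu : 0 < mu0) by (rewrite Hmus; apply Rdiv_lt_0_compat; assumption).
  set (p := q / (q - 1)).
  assert (Hp : 0 < p) by (unfold p; apply Rdiv_lt_0_compat; lra).
  set (c := Rpower mu0 (- (1 / p))).
  set (k := Rpower mu0 (1 / p)).
  assert (Hc : 0 < c) by apply Rpower_pos.
  assert (Hk : 0 < k) by apply Rpower_pos.
  assert (Hkc : k * c = 1).
  { unfold k, c. rewrite <- Rpower_plus. replace (1 / p + - (1 / p)) with 0 by ring.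
    apply Rpower_O; assumption. }
  set (f' := fun x => c * f x).
  assert (Hpn : pnorm n p f' = 1).
  { unfold pnorm.
    assert (E : vexp n (fun x => rpow (Rabs (f' x)) p) = 1).
    { unfold vexp. rewrite (vsum_ext n _ (fun x => / mu0 * f x)).
      - rewrite vsum_scal. fold s. rewrite Hmus. field. split; lra.
      - intros x _. unfold f', f. destruct (S x); simpl.
        + rewrite Rmult_1_r, Rabs_pos_eq by lra. unfold rpow.
          destruct (Req_EM_T c 0) as [e|_]; [lra|]. unfold c. rewrite Rpower_mult.
          replace (- (1 / p) * p) with (Ropp 1) by (field; lra).
          rewrite Rpower_Ropp, Rpower_1 by assumption. ring.
        + rewrite Rmult_0_r, Rabs_R0. unfold rpow.
          destruct (Req_EM_T 0 0) as [_|ne]; [ring| congruence]. }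
    rewrite E. unfold rpow. destruct (Req_EM_T 1 0) as [e|_]; [lra|].
    unfold Rpower. rewrite ln_1, Rmult_0_r, exp_0. reflexivity. }
  set (h0 := P f').
  set (T := vsum n (fun x => h0 x * h0 x)).
  assert (HT0 : 0 <= T) by (apply vsum_nonneg; intros; nra).
  assert (HT : T <= INR n * N ^ 2).
  { destruct Hlub as [Hub _].
    assert (Hle : pnorm n 2 h0 <= N) by (apply Hub; exists f'; split; [fold p; lra | reflexivity]).
    unfold pnorm, vexp in Hle.
    rewrite (vsum_ext n _ (fun x => h0 x * h0 x)) in Hle by (intros; apply rpow_sq).
    fold T in Hle. rewrite rpow_half in Hle by (apply div_nn; lra).
    assert (H1 : 0 <= T / INR n) by (apply div_nn; lra).
    pose proof (sqrt_sqrt _ H1). pose proof (sqrt_pos (T / INR n)).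
    assert (T / INR n <= N ^ 2) by nra.
    assert (T = INR n * (T / INR n)) by (field; lra).
    nra. }
  assert (Horth_u : forall u, top_span n adj d lam u ->
            vsum n (fun x => f' x * u x) = vsum n (fun x => h0 x * u x)).
  { intros u Hu. destruct (Horth f') as [_ Ho]. specialize (Ho u Hu).
    unfold inner, vexp in Ho. fold h0 in Ho.
    assert (Z : vsum n (fun x => (f' x - h0 x) * u x) = 0).
    { apply (Rmult_eq_reg_r (/ INR n)); [rewrite Rmult_0_l; exact Ho | apply Rinv_neq_0_compat; lra]. }
    rewrite (vsum_ext n _ (fun x => f' x * u x - h0 x * u x)) in Z by (intros; ring).
    rewrite vsum_minus in Z. lra. }
  set (a := fun x y => b2R (adj x y) / INR d).
  destruct (spec n a) as [l [Heig [Hpar Hquad]]].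
  { intros x y _ _. unfold a. rewrite Hsym. reflexivity. }
  assert (Ha0 : forall x y, 0 <= a x y).
  { intros. unfold a. apply div_nn; [apply b2R_nonneg | lra]. }
  assert (Hrow : forall x, (x < n)%nat -> vsum n (fun y => a x y) = 1).
  { intros x Hx. unfold a. rewrite (vsum_ext n _ (fun y => / INR d * b2R (adj x y))) by (intros; unfold Rdiv; ring).
    rewrite vsum_scal, Hdeg by assumption. field. lra. }
  assert (Hql : forall u, vsum n (fun x => u x * vsum n (fun y => a x y * u y)) <= vsum n (fun x => u x * u x)).
  { intro u.
    assert (H0 : 0 <= vsum n (fun x => vsum n (fun y => a x y * (u x - u y) ^ 2))).
    { apply vsum_nonneg; intros; apply vsum_nonneg; intros. apply Rmult_le_pos; [apply Ha0 | apply pow2_ge_0]. }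
    rewrite (vsum_ext n _ (fun x => u x * u x * vsum n (fun y => a x y) + (-2) * (u x * vsum n (fun y => a x y * u y)) + vsum n (fun y => a x y * (u y * u y)))) in H0.
    2:{ intros x _. rewrite (vsum_ext n _ (fun y => (u x * u x * a x y + (-2) * (u x * (a x y * u y))) + a x y * (u y * u y))) by (intros; ring).
        rewrite !vsum_plus, (vsum_scal n (u x * u x) (a x)), (vsum_scal n (-2) (fun y => u x * (a x y * u y))), (vsum_scal n (u x) (fun y => a x y * u y)). change (vsum n (a x)) with (vsum n (fun y => a x y)). ring. }
    rewrite !vsum_plus, vsum_scal in H0.
    rewrite (vsum_ext n (fun x => u x * u x * vsum n (fun y => a x y)) (fun x => u x * u x)) in H0
      by (intros; rewrite Hrow by assumption; ring).
    rewrite vsum_swap in H0.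
    rewrite (vsum_ext n (fun y => vsum n (fun x => a x y * (u y * u y))) (fun y => u y * u y)) in H0.
    2:{ intros y Hy. rewrite (vsum_ext n _ (fun x => (u y * u y) * a y x)).
        - rewrite vsum_scal, Hrow by assumption. ring.
        - intros x _. unfold a. rewrite Hsym. ring. }
    lra. }
  set (Q := vsum n (fun x => f x * vsum n (fun y => a x y * f y))).
  set (h := fun x => k * h0 x).
  assert (Hterm : forall mu, In mu l ->
     fst mu * (vsum n (fun x => f x * snd mu x)) ^ 2 <=
     lam * (vsum n (fun x => f x * snd mu x)) ^ 2 + (vsum n (fun x => h x * snd mu x)) ^ 2).
  { intros [m u] Hin. simpl. specialize (Heig m u Hin).
    set (cf := vsum n (fun x => f x * u x)). set (ce := vsum n (fun x => h x * u x)).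
    destruct (Rlt_le_dec m lam) as [Hml | Hml].
    - nra.
    - destruct (classic (exists x, (x < n)%nat /\ u x <> 0)) as [Hnz | Hz].
      + assert (Hev : eigvec n adj d m u).
        { split; [exact Hnz|]. intros x Hx. rewrite <- (Heig x Hx). unfold walk, a.
          rewrite (vsum_ext n (fun y => b2R (adj x y) / INR d * u y) (fun y => / INR d * (b2R (adj x y) * u y))) by (intros; unfold Rdiv; ring).
          rewrite vsum_scal. unfold Rdiv. ring. }
        assert (Htop : top_span n adj d lam u).
        { exists ((1, u) :: nil). split.
          - intros c0 v [Heq | []]. inversion Heq; subst. exists m. split; [lra | exact Hev].
          - intros x _. simpl. ring. }
        assert (Hce : cf = ce).
        { unfold cf, ce. rewrite (vsum_ext n (fun x => f x * u x) (fun x => k * (f' x * u x))).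
          - rewrite vsum_scal, Horth_u by exact Htop. rewrite <- vsum_scal. apply vsum_ext. intros; unfold h; ring.
          - intros x _. unfold f'. replace (k * (c * f x * u x)) with ((k * c) * (f x * u x)) by ring.
            rewrite Hkc. ring. }
        assert (Hm1 : m <= 1).
        { pose proof (Hql u) as Hq1.
          rewrite (vsum_ext n (fun x => u x * vsum n (fun y => a x y * u y)) (fun x => m * (u x * u x))) in Hq1
            by (intros x Hx; rewrite Heig by exact Hx; ring).
          rewrite vsum_scal in Hq1.
          destruct Hnz as [x1 [Hx1 Hux1]].
          assert (0 < vsum n (fun x => u x * u x)).
          { apply vsum_pos with x1; [intros; nra | exact Hx1 | ]. 
            assert (0 < u x1 * u x1) by (apply Rsqr_pos_lt; exact Hux1). exact H. }
          nra. }
        rewrite <- Hce. nra.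
      + assert (Hcf : cf = 0).
        { unfold cf. rewrite <- (vsum_const0 n). apply vsum_ext. intros x Hx.
          destruct (Req_dec (u x) 0) as [e|ne]; [rewrite e; ring|].
          exfalso. apply Hz. exists x. split; assumption. }
        rewrite Hcf. nra. }
  assert (HQ : Q <= lam * s + k ^ 2 * T).
  { unfold Q. rewrite Hquad.
    assert (Hs2 : s = fold_right Rplus 0 (map (fun mu => (vsum n (fun x => f x * snd mu x)) ^ 2) l)).
    { rewrite <- Hpar. unfold s. apply vsum_ext. intros; unfold f; rewrite b2R_01; reflexivity. }
    assert (Hh2 : k ^ 2 * T = fold_right Rplus 0 (map (fun mu => (vsum n (fun x => h x * snd mu x)) ^ 2) l)).
    { rewrite <- Hpar. unfold T. rewrite <- vsum_scal. apply vsum_ext. intros; unfold h; ring. }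
    rewrite Hs2, Hh2, <- fold_scal, <- fold_plus. apply fold_le. exact Hterm. }
  set (X := Rpower mu0 ((q - 2) / q)).
  assert (HX : 0 < X) by apply Rpower_pos.
  assert (HkX : k ^ 2 = X * mu0).
  { unfold X, k. simpl. rewrite Rmult_1_r, <- Rpower_plus.
    transitivity (Rpower mu0 ((q - 2) / q + 1)).
    - f_equal. unfold p. field. split; lra.
    - rewrite Rpower_plus, Rpower_1 by assumption. reflexivity. }
  assert (HQ2 : Q <= lam * s + N ^ 2 * X * s).
  { assert (k ^ 2 * T <= k ^ 2 * (INR n * N ^ 2)) by (apply Rmult_le_compat_l; [nra | exact HT]).
    assert (k ^ 2 * (INR n * N ^ 2) = N ^ 2 * X * s).
    { rewrite HkX, Hmus. field. lra. }
    lra. }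
  assert (Hexp : expansion n adj d S = (s - Q) / s).
  { unfold expansion. fold f. fold s. f_equal. unfold Q, s. rewrite <- vsum_minus. apply vsum_ext.
    intros x Hx.
    rewrite (vsum_ext n (fun y => b2R (adj x y) * b2R (negb (S y))) (fun y => INR d * a x y - INR d * (a x y * f y))).
    - rewrite vsum_minus, !vsum_scal, Hrow by exact Hx. unfold f. field. lra.
    - intros y _. unfold a, f. rewrite b2R_negb. field. lra. }
  assert (Hrp : rpow mu0 ((q - 2) / q) = X).
  { unfold rpow. destruct (Req_EM_T mu0 0); [lra | reflexivity]. }
  rewrite Hexp, Hrp. apply Rle_ge.
  assert (Hgoal : (1 - lam - N ^ 2 * X) * s <= s - Q) by nra.
  apply (Rmult_le_reg_r s); [exact Hs|].
  unfold Rdiv. rewrite Rmult_assoc, Rinv_l, Rmult_1_r by lra. exact Hgoal.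
Qed.

From mathcomp Require ssreflect ssrfun ssrbool eqtype ssrnat seq fintype bigop ssralg ssrnum matrix zmodp sesquilinear spectral complex ring Rstruct.

Module MC.
Import ssreflect ssrfun ssrbool eqtype ssrnat seq fintype bigop ssralg ssrnum matrix zmodp sesquilinear spectral complex ring Rstruct.
Import GRing.Theory Num.Theory.
Local Open Scope ring_scope.
Local Open Scope sesquilinear_scope.
Section C.
Variable R : rcfType.
Notation CRe := (@complex.Re R).
Notation CIm := (@complex.Im R).
Lemma Re_conjM (z w : R[i]) : CRe (z^* * w) = CRe z * CRe w + CIm z * CIm w.
Proof. case: z => a b; case: w => c e /=. ring. Qed.
Lemma Re_conjCM (z w : R[i]) (c : R) : CRe (z^* * c%:C%C * w) = c * (CRe z * CRe w + CIm z * CIm w).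
Proof. case: z => a b; case: w => u e /=. ring. Qed.
Lemma Re_rC (a : R) (z : R[i]) : CRe (a%:C%C * z) = a * CRe z.
Proof. case: z => b c /=. ring. Qed.
Lemma Im_rC (a : R) (z : R[i]) : CIm (a%:C%C * z) = a * CIm z.
Proof. case: z => b c /=. ring. Qed.
Lemma Re_conjMC (z : R[i]) (c : R) : CRe (z^* * c%:C%C) = c * CRe z.
Proof. case: z => a b /=. ring. Qed.
Lemma Im_conjMC (z : R[i]) (c : R) : CIm (z^* * c%:C%C) = - (c * CIm z).
Proof. case: z => a b /=. ring. Qed.
Lemma Re_conj (z : R[i]) : CRe (z^*) = CRe z.
Proof. by case: z. Qed.
Lemma Im_conj (z : R[i]) : CIm (z^*) = - CIm z.
Proof. by case: z. Qed.

Lemma sqr_sum (I : finType) (a : I -> R) : (\sum_i a i) ^+ 2 = \sum_i \sum_j a i * a j.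
Proof. by rewrite expr2 big_distrl /=; apply: eq_bigr => i _; rewrite big_distrr. Qed.

Lemma quad n (w : 'I_n -> R) (r s : 'I_n -> 'I_n -> R) (g : 'I_n -> R) :
  \sum_x g x * (\sum_y (\sum_j w j * (r j x * r j y + s j x * s j y)) * g y)
  = \sum_j w j * ((\sum_x g x * r j x) ^+ 2 + (\sum_x g x * s j x) ^+ 2).
Proof.
transitivity (\sum_x \sum_y \sum_j (g x * (w j * (r j x * r j y + s j x * s j y)) * g y)).
  apply: eq_bigr => x _; rewrite big_distrr /=; apply: eq_bigr => y _.
  by rewrite big_distrl big_distrr /=; apply: eq_bigr => j _; rewrite mulrA.
transitivity (\sum_j \sum_x \sum_y (g x * (w j * (r j x * r j y + s j x * s j y)) * g y)).
  under eq_bigr => x _ do rewrite exchange_big. by rewrite exchange_big.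
apply: eq_bigr => j _; rewrite !sqr_sum -big_split big_distrr /=.
apply: eq_bigr => x _; rewrite -big_split big_distrr /=; apply: eq_bigr => y _.
ring.
Qed.

Lemma spec_mc n (A : 'M[R]_n) : A^T = A ->
  exists (P : 'M[R[i]]_n) (D : 'I_n -> R),
   (forall x j, \sum_y A x y * CRe (P j y) = D j * CRe (P j x)) /\
   (forall x j, \sum_y A x y * CIm (P j y) = D j * CIm (P j x)) /\
   (forall g : 'I_n -> R, \sum_x g x * g x = \sum_j ((\sum_x g x * CRe (P j x))^+2 + (\sum_x g x * CIm (P j x))^+2)) /\
   (forall g : 'I_n -> R, \sum_x g x * (\sum_y A x y * g y) = \sum_j D j * ((\sum_x g x * CRe (P j x))^+2 + (\sum_x g x * CIm (P j x))^+2)).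
Proof.
move=> AT.
pose Ac := map_mx (real_complex R) A.
have Aherm : Ac \is hermsymmx.
  rewrite is_hermitianmxE expr0 scale1r; apply/eqP/matrixP => i j.
  rewrite !mxE; have := congr1 (fun M : 'M_n => M i j) AT; rewrite mxE => <-.
  exact: (esym (conjc_real (A j i))).
pose P := spectralmx Ac; pose D := spectral_diag Ac.
have Dreal := hermitian_spectral_diag_real Aherm.
have /orthomx_spectralP := hermitian_normalmx Aherm.
rewrite -/P -/D invmx_unitary ?spectral_unitarymx // => AcE.
have PPt : P *m P ^t* = 1%:M by apply/unitarymxP; exact: spectral_unitarymx.
have PtP : P ^t* *m P = 1%:M.
  rewrite -invmx_unitary ?spectral_unitarymx //; apply: mulVmx; exact: spectral_unit.
pose d j := CRe (D 0 j).
have Dd : forall j, D 0 j = (d j)%:C%C.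
  move=> j; rewrite /d; apply/esym/RRe_real; exact: (mxOverP Dreal).
have E1 : forall x j, \sum_y (A x y)%:C%C * (P j y)^* = (P j x)^* * (d j)%:C%C.
  move=> x j.
  have : Ac *m P ^t* = P ^t* *m diag_mx D.
    by rewrite AcE -!mulmxA PPt mulmx1.
  move=> /(congr1 (fun M : 'M_n => M x j)); rewrite mul_mx_diag !mxE Dd => <-.
  by apply: eq_bigr => y _; rewrite !mxE.
have E3 : forall x y, A x y = \sum_j d j * (CRe (P j x) * CRe (P j y) + CIm (P j x) * CIm (P j y)).
  move=> x y; have := congr1 (fun M : 'M_n => CRe (M x y)) AcE.
  rewrite /= !mxE /= => ->; rewrite raddf_sum; apply: eq_bigr => j _.
  rewrite mul_mx_diag !mxE Dd; exact: Re_conjCM.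
have E2 : forall x y, \sum_j (CRe (P j x) * CRe (P j y) + CIm (P j x) * CIm (P j y)) = (x == y)%:R.
  move=> x y; have := congr1 (fun M : 'M_n => CRe (M x y)) PtP.
  rewrite !mxE raddf_sum raddfMn /= => <-; apply: eq_bigr => j _.
  by rewrite !mxE Re_conjM.
exists P, d; split; [|split; [|split]].
- move=> x j; have := congr1 (@complex.Re R) (E1 x j).
  rewrite raddf_sum Re_conjMC => <-; apply: eq_bigr => y _.
  by rewrite /= Re_rC Re_conj.
- move=> x j; have := congr1 (@complex.Im R) (E1 x j).
  rewrite raddf_sum Im_conjMC => /(congr1 (fun t => - t)); rewrite opprK => <-.
  rewrite -sumrN; apply: eq_bigr => y _.
  by rewrite /= Im_rC Im_conj mulrN opprK.
- move=> g; rewrite [RHS](eq_bigr (fun j => 1 * ((\sum_x g x * CRe (P j x))^+2 + (\sum_x g x * CIm (P j x))^+2))); last by move=> j _; rewrite mul1r.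
  rewrite -quad.
  apply: eq_bigr => x _; congr (_ * _).
  rewrite (bigD1 x) //= [X in _ + X]big1 ?addr0.
    by under eq_bigr => j _ do rewrite mul1r; rewrite E2 eqxx mul1r.
  move=> y /negbTE yx; under eq_bigr => j _ do rewrite mul1r.
  by rewrite E2 eq_sym yx mul0r.
- move=> g; rewrite -quad; apply: eq_bigr => x _; congr (_ * _).
  by apply: eq_bigr => y _; rewrite E3.
Qed.
End C.

Notation RR := Rdefinitions.R.

Lemma vsumE n (f : nat -> RR) : vsum n f = \sum_(i < n) f i.
Proof.
rewrite -(big_mkord xpredT) /vsum /index_iota subn0.
have -> : List.seq 0 n = iota 0 n.
  elim: n {f} 0%N => [//|n IH] k /=; by rewrite IH.
elim: (iota 0 n) => [|x s IH]; first by rewrite big_nil.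
by rewrite big_cons /= IH.
Qed.

Lemma foldE (T : Type) (F : T -> RR) (l : list T) :
  List.fold_right Rplus 0%R (List.map F l) = \sum_(t <- l) F t.
Proof.
elim: l => [|x s IH]; first by rewrite big_nil.
by rewrite big_cons /= IH.
Qed.

Definition ext {n} (F : 'I_n -> RR) (x : nat) : RR :=
  match (insub x : option 'I_n) with Some i => F i | None => 0 end.

Lemma extE n (F : 'I_n -> RR) (i : 'I_n) : ext F i = F i.
Proof. by rewrite /ext valK. Qed.

Lemma spec_std : SPEC.
Proof.
move=> n a asym.
pose A := \matrix_(i < n, j < n) a i j.
have AT : A^T = A.
  by apply/matrixP => i j; rewrite !mxE asym //; apply/ltP.
have [P [D [Er [Ei [Q1 Q2]]]]] := @spec_mc RR n A AT.
pose r j := ext (fun y => complex.Re (P j y)).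
pose s j := ext (fun y => complex.Im (P j y)).
exists (List.map (fun j => (D j, r j)) (index_enum 'I_n) ++ List.map (fun j => (D j, s j)) (index_enum 'I_n)).
split; [|split].
- move=> m u /List.in_app_iff [] /List.in_map_iff [j [[<- <-] _]] x /ltP xn.
  + rewrite /r /s vsumE -[x]/(nat_of_ord (Ordinal xn)) extE; apply: etrans (Er (Ordinal xn) j).
    by apply: eq_bigr => y _; rewrite extE mxE.
  + rewrite /r /s vsumE -[x]/(nat_of_ord (Ordinal xn)) extE; apply: etrans (Ei (Ordinal xn) j).
    by apply: eq_bigr => y _; rewrite extE mxE.
- move=> g; rewrite foldE big_cat !big_map /= -big_split vsumE Q1 /=.
  apply: eq_bigr => j _; rewrite !RmultE !mulr1 -!expr2 !vsumE /r /s; congr (_ ^+ 2 + _ ^+ 2).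
    by apply: eq_bigr => x _; rewrite extE.
  by apply: eq_bigr => x _; rewrite extE.
- move=> g; rewrite foldE big_cat !big_map /= -big_split vsumE.
  rewrite (eq_bigr (fun x : 'I_n => g x * \sum_(y < n) A x y * g y)); last first.
    by move=> x _; rewrite vsumE; congr (_ * _); apply: eq_bigr => y _; rewrite mxE.
  rewrite Q2; apply: eq_bigr => j _; rewrite !RmultE !mulr1 -!expr2 !vsumE /r /s mulrDr; congr (_ * _ ^+ 2 + _ * _ ^+ 2).
    by apply: eq_bigr => x _; rewrite extE.
  by apply: eq_bigr => x _; rewrite extE.
Qed.

End MC.




Theorem lemmaD4 (n : nat) (adj : nat -> nat -> bool) (d : nat)
  (lam q : R) (P : (nat -> R) -> (nat -> R)) (N : R) (S : nat -> bool) :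
  (1 <= d)%nat ->
  regular_graph n adj d ->
  0 < lam < 1 ->
  2 <= q ->
  orth_projector n (top_span n adj d lam) P ->
  is_lub (opnorm_set n (q / (q - 1)) P) N ->
  (exists x, (x < n)%nat /\ S x = true) ->
  (forall x, S x = true -> (x < n)%nat) ->
  expansion n adj d S >= 1 - lam - N ^ 2 * rpow (mu n S) ((q - 2) / q).
Proof.
  exact (main_aux MC.spec_std n adj d lam q P N S).
Qed.
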